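(* Let $G$ be a connected graph with $|V(G)| \ge 3$. Then $\det(G) \le 2\det'(G)$.
   Context: A vertex subset $S$ of $G$ is a vertex determining set if the only automorphism of $G$ fixing every vertex of $S$ is the identity; the determining number $\det(G)$ is the minimum size of a vertex determining set. For a graph $G$ with at most one isolated vertex and no component isomorphic to $K_2$, an edge subset $T$ is an edge determining set if the only automorphism $\phi$ of $G$ satisfying $\{\phi(u),\phi(v)\}=\{u,v\}$ for all $\{u,v\}\in T$ is the identity; the determining index $\det'(G)$ is the minimum size of an edge determining set. *)

(* Defs.v *)
From mathcomp Require Import all_boot all_fingroup.
Set Implicit Arguments. Unset Strict Implicit. Unset Printing Implicit Defensive.

Definition simple_graph (T : finType) (e : rel T) : Prop :=
  symmetric e /\ irreflexive e.

Definition connected_graph (T : finType) (e : rel T) : Prop :=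
  forall x y : T, connect e x y.

Definition is_aut (T : finType) (e : rel T) (p : {perm T}) : bool :=
  [forall x, forall y, e (p x) (p y) == e x y].

Definition is_edge (T : finType) (e : rel T) (A : {set T}) : bool :=
  [exists u, exists v, e u v && (A == [set u; v])].

Definition vdet_set (T : finType) (e : rel T) (S : {set T}) : bool :=
  [forall p : {perm T}, (is_aut e p && [forall x in S, p x == x]) ==> (p == 1%g)].

Definition edet_set (T : finType) (e : rel T) (D : {set {set T}}) : bool :=
  [forall A in D, is_edge e A] &&
  [forall p : {perm T}, (is_aut e p && [forall A in D, (p @: A) == A]) ==> (p == 1%g)].

(* determining number: minimum size of a vertex determining set
   (setT is always one, so #|T| is a correct default) *)
Definition det_num (T : finType) (e : rel T) : nat :=
  \big[minn/#|T|]_(S : {set T} | vdet_set e S) #|S|.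

(* determining index: minimum size of an edge determining set
   (the default #|{set {set T}}| is never attained under the paper's hypotheses) *)
Definition det_index (T : finType) (e : rel T) : nat :=
  \big[minn/#|{set {set T}}|]_(D : {set {set T}} | edet_set e D) #|D|.

(* Main.v *)
Require Import Defs.
From mathcomp Require Import all_boot all_fingroup.

Lemma bigmin_leF (I : finType) (P : pred I) (F : I -> nat) x i :
  P i -> \big[minn/x]_(j | P j) F j <= F i.
Proof.
move=> Pi; rewrite unlock /reducebig.
have : i \in index_enum I by rewrite mem_index_enum.
elim: (index_enum I) => //= j r IH; rewrite inE => /predU1P[<-|/IH H].
  by rewrite Pi geq_minl.
by case: (P j) => //; rewrite geq_min H orbT.
Qed.

Lemma bigmin_leX (I : finType) (P : pred I) (F : I -> nat) x :
  \big[minn/x]_(j | P j) F j <= x.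
Proof.
rewrite unlock /reducebig.
elim: (index_enum I) => //= j r IH.
by case: (P j) => //; rewrite geq_min IH orbT.
Qed.

Lemma det_num_le (T : finType) (e : rel T) : det_num e <= #|T|.
Proof. exact: bigmin_leX. Qed.

Lemma edet_bound (T : finType) (e : rel T) (D : {set {set T}}) :
  edet_set e D -> det_num e <= 2 * #|D|.
Proof.
case/andP=> /forall_inP Hed /forallP Hp.
have Hv : vdet_set e (cover D).
  apply/forallP=> p; apply/implyP=> /andP[Ha /forall_inP Hfix].
  apply: (implyP (Hp p)); rewrite Ha /=; apply/forall_inP=> A HA.
  apply/eqP/setP=> y; apply/imsetP/idP.
    case=> z Hz ->; have -> : p z = z.
      by apply/eqP/Hfix; apply/bigcupP; exists A.
    done.
  move=> Hy; exists y => //; apply/esym/eqP/Hfix; apply/bigcupP; exists A => //.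
rewrite /det_num; apply: (@leq_trans #|cover D|); first by apply: bigmin_leF.
apply: (@leq_trans (\sum_(A in D) #|A|)); first exact: (leq_card_cover D).
rewrite mulnC -sum_nat_const; apply: leq_sum => A /Hed /existsP[u /existsP[v /andP[_ /eqP->]]].
by rewrite cards2; case: (u != v).
Qed.

Theorem theorem5 (T : finType) (e : rel T) :
  simple_graph e -> connected_graph e -> 3 <= #|T| ->
  det_num e <= 2 * det_index e.
Proof.
move=> _ _ _; rewrite /det_index.
apply: (big_ind (fun m => det_num e <= 2 * m)).
- apply: (@leq_trans #|T|); first exact: det_num_le.
  apply: (@leq_trans #|{set {set T}}|); last by rewrite leq_pmull.
  apply: (@leq_card T _ (fun x : T => [set [set x]])).
  by move=> x y /set1_inj /set1_inj.
- move=> a b Ha Hb; rewrite /minn; by case: ifP.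
- by move=> D; apply: edet_bound.
Qed.
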